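(* Let $X_B'\subseteq\mathbb{P}^5$ be the image of the morphism $$\eta:\mathbb{P}^2\ni(a:b:c)\longmapsto \big(a^3: b^3: c^3: a(b^2-c^2): b(a^2-c^2): c(a^2-b^2)\big)\in\mathbb{P}^5,$$ and let $Z\subset\mathbb{P}^2$ be the set of nine points $(1:0:0),(0:1:0),(0:0:1),(1:1:0),(1:-1:0),(1:0:1),(1:0:-1),(0:1:1),(0:1:-1)$. Then $X_B'$ is hypo-osculating; more precisely, $\dim \mathrm{Osc}^{(2)}_{\eta(Q)}X_B'=4$ for all $Q\in\mathbb{P}^2\setminus Z$, while $\dim\mathrm{Osc}^{(2)}_{\eta(Q)}X_B'=3$ for each of the nine points $Q\in Z$.
   Context: For a point $\eta(Q)$ of the surface $X_B'$ parametrized by $\eta$, the second osculating space $\mathrm{Osc}^{(2)}_{\eta(Q)}X_B'$ is the linear subspace of $\mathbb{P}^5$ spanned by the point and the partial derivatives of order $\le 2$ of the coordinate functions with respect to local parameters at the point, evaluated there (equivalently, the projectivized span of all second-order partial derivatives of the cubic forms defining $\eta$ with respect to $a,b,c$, evaluated at $Q$). A surface in $\mathbb{P}^5$ is hypo-osculating if this dimension is lower than the expected value $5$ at every point. *)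

(* Defs.v *)
From HB Require Import structures.
From mathcomp Require Import all_boot all_order all_algebra.
From mathcomp Require Import mpoly.
Set Implicit Arguments. Unset Strict Implicit. Unset Printing Implicit Defensive.
Import GRing.Theory.
Local Open Scope ring_scope.

(* Working over an algebraically closed field F of characteristic 0
   (e.g. the complex numbers). Homogeneous coordinates (a:b:c) are vectors
   'I_3 -> F; index 0 = a, 1 = b, 2 = c. *)

Section Eta.
Variable F : fieldType.

Definition xa : {mpoly F[3]} := 'X_(0 : 'I_3).
Definition xb : {mpoly F[3]} := 'X_(1 : 'I_3).
Definition xc : {mpoly F[3]} := 'X_(2 : 'I_3).

Definition eta_form (j : 'I_6) : {mpoly F[3]} :=
  match val j with
  | 0 => xa ^+ 3
  | 1 => xb ^+ 3
  | 2 => xc ^+ 3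
  | 3 => xa * (xb ^+ 2 - xc ^+ 2)
  | 4 => xb * (xa ^+ 2 - xc ^+ 2)
  | _ => xc * (xa ^+ 2 - xb ^+ 2)
  end.

(* Its row space is the affine cone over
   Osc^(2)_{eta(Q)} X_B' in P^5. *)
Definition point_row (Q : 'I_3 -> F) : 'M[F]_(1, 6) :=
  \matrix_(r < 1, j < 6) (eta_form j).@[Q].
Definition first_derivs (Q : 'I_3 -> F) : 'M[F]_(3, 6) :=
  \matrix_(i < 3, j < 6) (mderiv i (eta_form j)).@[Q].
Definition second_derivs (i : 'I_3) (Q : 'I_3 -> F) : 'M[F]_(3, 6) :=
  \matrix_(k < 3, j < 6) (mderiv k (mderiv i (eta_form j))).@[Q].

Definition osc_matrix (Q : 'I_3 -> F) :=
  col_mx (point_row Q)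
    (col_mx (first_derivs Q)
      (col_mx (second_derivs 0 Q)
        (col_mx (second_derivs 1 Q) (second_derivs 2 Q)))).

Definition osc2_dim (Q : 'I_3 -> F) : nat := (\rank (osc_matrix Q)).-1.

Definition same_point (Q P : 'I_3 -> F) : Prop :=
  exists k : F, k != 0 /\ forall i, Q i = k * P i.

Definition vec3 (a b c : F) : 'I_3 -> F :=
  fun i => match val i with 0 => a | 1 => b | _ => c end.

Definition Zpts : seq ('I_3 -> F) :=
  [:: vec3 1 0 0; vec3 0 1 0; vec3 0 0 1;
      vec3 1 1 0; vec3 1 (-1) 0; vec3 1 0 1;
      vec3 1 0 (-1); vec3 0 1 1; vec3 0 1 (-1)].

Definition nonzero3 (Q : 'I_3 -> F) : Prop := exists i, Q i != 0.

Definition inZ (Q : 'I_3 -> F) : Prop :=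
  exists2 t : nat, (t < 9)%N & same_point Q (nth (fun _ => 0) Zpts t).

Definition hypo_osculating : Prop :=
  forall Q : 'I_3 -> F, nonzero3 Q -> (osc2_dim Q < 5)%N.

End Eta.

(* Main.v *)
Require Import Defs.
From HB Require Import structures.
From mathcomp Require Import all_boot all_order all_algebra.
From mathcomp Require Import mpoly.
From mathcomp Require Import ring zify.
Set Implicit Arguments. Unset Strict Implicit. Unset Printing Implicit Defensive.
Import GRing.Theory.
Local Open Scope ring_scope.

Lemma mderivXU (F : fieldType) (i k : 'I_3) :
  mderiv k ('X_i : {mpoly F[3]}) = (i == k)%:R%:MP.
Proof.
rewrite mderivX mnm1E; case: eqP => [->|_].
  have -> : (U_(k) - U_(k))%MM = 0%MM by apply/mnmP => l; rewrite mnmBE subnn mnm0E.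
  by rewrite mpolyX0 scale1r.
by rewrite scale0r.
Qed.

Lemma dX (F : fieldType) (i k : nat) (pi : (i < 3)%N) (pk : (k < 3)%N) :
  mderiv (Ordinal pk) ('X_(Ordinal pi) : {mpoly F[3]}) = if i == k then 1 else 0.
Proof. rewrite mderivXU (_ : (Ordinal pi == Ordinal pk) = (i == k)) //.
by case: (i == k); rewrite ?mpolyC1 ?mpolyC0. Qed.

Lemma dX00 (F : fieldType) (pk : (0 < 3)%N) :
  mderiv (Ordinal pk) ('X_(0 : 'I_3) : {mpoly F[3]}) = 1.
Proof. rewrite (_ : (0 : 'I_3) = Ordinal (isT : (0 < 3)%N)); last exact: val_inj. by rewrite dX. Qed.
Lemma dX01 (F : fieldType) (pk : (1 < 3)%N) :
  mderiv (Ordinal pk) ('X_(0 : 'I_3) : {mpoly F[3]}) = 0.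
Proof. rewrite (_ : (0 : 'I_3) = Ordinal (isT : (0 < 3)%N)); last exact: val_inj. by rewrite dX. Qed.
Lemma dX02 (F : fieldType) (pk : (2 < 3)%N) :
  mderiv (Ordinal pk) ('X_(0 : 'I_3) : {mpoly F[3]}) = 0.
Proof. rewrite (_ : (0 : 'I_3) = Ordinal (isT : (0 < 3)%N)); last exact: val_inj. by rewrite dX. Qed.
Lemma dX10 (F : fieldType) (pk : (0 < 3)%N) :
  mderiv (Ordinal pk) ('X_(1 : 'I_3) : {mpoly F[3]}) = 0.
Proof. rewrite (_ : (1 : 'I_3) = Ordinal (isT : (1 < 3)%N)); last exact: val_inj. by rewrite dX. Qed.
Lemma dX11 (F : fieldType) (pk : (1 < 3)%N) :
  mderiv (Ordinal pk) ('X_(1 : 'I_3) : {mpoly F[3]}) = 1.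
Proof. rewrite (_ : (1 : 'I_3) = Ordinal (isT : (1 < 3)%N)); last exact: val_inj. by rewrite dX. Qed.
Lemma dX12 (F : fieldType) (pk : (2 < 3)%N) :
  mderiv (Ordinal pk) ('X_(1 : 'I_3) : {mpoly F[3]}) = 0.
Proof. rewrite (_ : (1 : 'I_3) = Ordinal (isT : (1 < 3)%N)); last exact: val_inj. by rewrite dX. Qed.
Lemma dX20 (F : fieldType) (pk : (0 < 3)%N) :
  mderiv (Ordinal pk) ('X_(2 : 'I_3) : {mpoly F[3]}) = 0.
Proof. rewrite (_ : (2 : 'I_3) = Ordinal (isT : (2 < 3)%N)); last exact: val_inj. by rewrite dX. Qed.
Lemma dX21 (F : fieldType) (pk : (1 < 3)%N) :
  mderiv (Ordinal pk) ('X_(2 : 'I_3) : {mpoly F[3]}) = 0.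
Proof. rewrite (_ : (2 : 'I_3) = Ordinal (isT : (2 < 3)%N)); last exact: val_inj. by rewrite dX. Qed.
Lemma dX22 (F : fieldType) (pk : (2 < 3)%N) :
  mderiv (Ordinal pk) ('X_(2 : 'I_3) : {mpoly F[3]}) = 1.
Proof. rewrite (_ : (2 : 'I_3) = Ordinal (isT : (2 < 3)%N)); last exact: val_inj. by rewrite dX. Qed.

Lemma d1 (F : fieldType) (k : 'I_3) : mderiv k (1 : {mpoly F[3]}) = 0.
Proof. by rewrite -mpolyC1 mderivC. Qed.
Lemma d0 (F : fieldType) (k : 'I_3) : mderiv k (0 : {mpoly F[3]}) = 0.
Proof. exact: raddf0. Qed.

Lemma xaE (F : fieldType) : xa F = 'X_(Ordinal (isT : (0 < 3)%N)). Proof. by []. Qed.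
Lemma xbE (F : fieldType) : xb F = 'X_(Ordinal (isT : (1 < 3)%N)). Proof. by []. Qed.
Lemma xcE (F : fieldType) : xc F = 'X_(Ordinal (isT : (2 < 3)%N)). Proof. by []. Qed.

Lemma expr3 (R : comRingType) (x : R) : x ^+ 3 = x * x * x.
Proof. by rewrite !exprS expr0 mulr1 mulrA. Qed.

Ltac comp_entry :=
  rewrite /eta_form /=; rewrite /xa /xb /xc;
  rewrite ?expr3 ?expr2 ?(mderivM, mderivB, mderivD, mderivN, dX00, dX01, dX02, dX10, dX11, dX12, dX20, dX21, dX22, d1, d0);
  rewrite ?(mul0r, mulr0, mul1r, mulr1, addr0, add0r, subr0, sub0r);
  rewrite ?(mevalM, mevalB, mevalD, mevalN, mevalXU, meval1, meval0); ring.

Ltac ord_cases i := case: i => [[|[|[|[|[|[|i]]]]]] ?] //=.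

Definition mk (F : fieldType) m n (l : seq (seq F)) : 'M[F]_(m, n) :=
  \matrix_(i < m, j < n) nth 0 (nth [::] l i) j.

Lemma pointE (F : fieldType) (Q : 'I_3 -> F) :
  point_row Q = mk 1 6 [:: [:: Q 0^+3; Q 1^+3; Q 2^+3; Q 0*(Q 1^+2 - Q 2^+2); Q 1*(Q 0^+2-Q 2^+2); Q 2*(Q 0^+2-Q 1^+2)]].
Proof.
apply/matrixP => i j; rewrite !mxE.
ord_cases i; ord_cases j; comp_entry.
Qed.

Lemma firstE (F : fieldType) (Q : 'I_3 -> F) :
  first_derivs Q = mk 3 6
   [:: [:: 3%:R * Q 0^+2; 0; 0; Q 1^+2 - Q 2^+2; 2%:R*Q 0*Q 1; 2%:R*Q 0*Q 2];
       [:: 0; 3%:R*Q 1^+2; 0; 2%:R*Q 0*Q 1; Q 0^+2-Q 2^+2; -(2%:R*Q 1*Q 2)];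
       [:: 0; 0; 3%:R*Q 2^+2; -(2%:R*Q 0*Q 2); -(2%:R*Q 1*Q 2); Q 0^+2-Q 1^+2]].
Proof.
apply/matrixP => i j; rewrite !mxE.
ord_cases i; ord_cases j; comp_entry.
Qed.

Lemma sdE00 (F : fieldType) (Q : 'I_3 -> F) (p : (0 < 3)%N) (q : (0 < 3)%N) (j : 'I_6) :
  (mderiv (Ordinal q) (mderiv (Ordinal p) (eta_form F j))).@[Q] = nth 0 [:: 6%:R*Q 0; 0; 0; 0; 2%:R*Q 1; 2%:R*Q 2] j.
Proof. case: j => [[|[|[|[|[|[|j]]]]]] ?] //; comp_entry. Qed.

Lemma sdE11 (F : fieldType) (Q : 'I_3 -> F) (p : (1 < 3)%N) (q : (1 < 3)%N) (j : 'I_6) :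
  (mderiv (Ordinal q) (mderiv (Ordinal p) (eta_form F j))).@[Q] = nth 0 [:: 0; 6%:R*Q 1; 0; 2%:R*Q 0; 0; -(2%:R*Q 2)] j.
Proof. case: j => [[|[|[|[|[|[|j]]]]]] ?] //; comp_entry. Qed.

Lemma sdE22 (F : fieldType) (Q : 'I_3 -> F) (p : (2 < 3)%N) (q : (2 < 3)%N) (j : 'I_6) :
  (mderiv (Ordinal q) (mderiv (Ordinal p) (eta_form F j))).@[Q] = nth 0 [:: 0; 0; 6%:R*Q 2; -(2%:R*Q 0); -(2%:R*Q 1); 0] j.
Proof. case: j => [[|[|[|[|[|[|j]]]]]] ?] //; comp_entry. Qed.

Lemma sdE01 (F : fieldType) (Q : 'I_3 -> F) (p : (0 < 3)%N) (q : (1 < 3)%N) (j : 'I_6) :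
  (mderiv (Ordinal q) (mderiv (Ordinal p) (eta_form F j))).@[Q] = nth 0 [:: 0; 0; 0; 2%:R*Q 1; 2%:R*Q 0; 0] j.
Proof. case: j => [[|[|[|[|[|[|j]]]]]] ?] //; comp_entry. Qed.

Lemma sdE02 (F : fieldType) (Q : 'I_3 -> F) (p : (0 < 3)%N) (q : (2 < 3)%N) (j : 'I_6) :
  (mderiv (Ordinal q) (mderiv (Ordinal p) (eta_form F j))).@[Q] = nth 0 [:: 0; 0; 0; -(2%:R*Q 2); 0; 2%:R*Q 0] j.
Proof. case: j => [[|[|[|[|[|[|j]]]]]] ?] //; comp_entry. Qed.

Lemma sdE12 (F : fieldType) (Q : 'I_3 -> F) (p : (1 < 3)%N) (q : (2 < 3)%N) (j : 'I_6) :
  (mderiv (Ordinal q) (mderiv (Ordinal p) (eta_form F j))).@[Q] = nth 0 [:: 0; 0; 0; 0; -(2%:R*Q 2); -(2%:R*Q 1)] j.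
Proof. case: j => [[|[|[|[|[|[|j]]]]]] ?] //; comp_entry. Qed.

Definition S6 (F : fieldType) (a b c : F) : 'M[F]_6 :=
  mk 6 6 [:: [:: 6%:R*a; 0; 0; 0; 2%:R*b; 2%:R*c];
     [:: 0; 6%:R*b; 0; 2%:R*a; 0; -(2%:R*c)];
     [:: 0; 0; 6%:R*c; -(2%:R*a); -(2%:R*b); 0];
     [:: 0; 0; 0; 2%:R*b; 2%:R*a; 0];
     [:: 0; 0; 0; -(2%:R*c); 0; 2%:R*a];
     [:: 0; 0; 0; 0; -(2%:R*c); -(2%:R*b)]].

Definition sidx (i k : nat) : nat :=
  match i, k with
  | 0, 0 => 0 | 1, 1 => 1 | 2, 2 => 2
  | 0, 1 | 1, 0 => 3 | 0, 2 | 2, 0 => 4 | _, _ => 5 end.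

Lemma secondE (F : fieldType) (Q : 'I_3 -> F) (i k : 'I_3) (j : 'I_6) :
  second_derivs i Q k j = nth 0 (nth [::] [:: [:: 6%:R*Q 0; 0; 0; 0; 2%:R*Q 1; 2%:R*Q 2];
     [:: 0; 6%:R*Q 1; 0; 2%:R*Q 0; 0; -(2%:R*Q 2)];
     [:: 0; 0; 6%:R*Q 2; -(2%:R*Q 0); -(2%:R*Q 1); 0];
     [:: 0; 0; 0; 2%:R*Q 1; 2%:R*Q 0; 0];
     [:: 0; 0; 0; -(2%:R*Q 2); 0; 2%:R*Q 0];
     [:: 0; 0; 0; 0; -(2%:R*Q 2); -(2%:R*Q 1)]] (sidx i k)) j.
Proof.
rewrite !mxE.
case: i => [[|[|[|i]]] pi] //; case: k => [[|[|[|k]]] pk] //.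
- exact: sdE00.
- exact: sdE01.
- exact: sdE02.
- rewrite mderiv_comm; exact: sdE01.
- exact: sdE11.
- exact: sdE12.
- rewrite mderiv_comm; exact: sdE02.
- rewrite mderiv_comm; exact: sdE12.
- exact: sdE22.
Qed.


Lemma sub_col_l (F : fieldType) m1 m2 n (A : 'M[F]_(m1, n)) (B : 'M[F]_(m2, n)) :
  (A <= col_mx A B)%MS.
Proof. by have := submx_refl (col_mx A B); rewrite col_mx_sub => /andP[]. Qed.
Lemma sub_col_r (F : fieldType) m1 m2 n (A : 'M[F]_(m1, n)) (B : 'M[F]_(m2, n)) :
  (B <= col_mx A B)%MS.
Proof. by have := submx_refl (col_mx A B); rewrite col_mx_sub => /andP[]. Qed.

Lemma osc_rank (F : fieldType) (Q : 'I_3 -> F) :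
  (2%:R : F) != 0 -> (3%:R : F) != 0 ->
  \rank (osc_matrix Q) = \rank (S6 (Q 0) (Q 1) (Q 2)).
Proof.
move=> h2 h3.
have h6 : (6%:R : F) != 0 by rewrite (_ : 6 = 2 * 3)%N // natrM mulf_neq0.
apply/eqP; rewrite eqn_leq; apply/andP; split; apply: mxrankS.
- rewrite /osc_matrix !col_mx_sub; apply/and5P; split.
  + rewrite pointE.
    have -> : mk 1 6 [:: [:: Q 0^+3; Q 1^+3; Q 2^+3; Q 0*(Q 1^+2 - Q 2^+2); Q 1*(Q 0^+2-Q 2^+2); Q 2*(Q 0^+2-Q 1^+2)]]
      = mk 1 6 [:: [:: Q 0 ^+2 / 6%:R; Q 1 ^+2 / 6%:R; Q 2 ^+2 / 6%:R; Q 0 * Q 1 / 3%:R; Q 0 * Q 2 / 3%:R; Q 1 * Q 2 / 3%:R]]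
        *m S6 (Q 0) (Q 1) (Q 2).
      apply/matrixP => i j; rewrite !mxE; ord_cases i; ord_cases j;
      rewrite !big_ord_recr big_ord0 /= !mxE /=; field; by rewrite ?h2 ?h3 ?h6.
    exact: submxMl.
  + rewrite firstE.
    have -> : mk 3 6
   [:: [:: 3%:R * Q 0^+2; 0; 0; Q 1^+2 - Q 2^+2; 2%:R*Q 0*Q 1; 2%:R*Q 0*Q 2];
       [:: 0; 3%:R*Q 1^+2; 0; 2%:R*Q 0*Q 1; Q 0^+2-Q 2^+2; -(2%:R*Q 1*Q 2)];
       [:: 0; 0; 3%:R*Q 2^+2; -(2%:R*Q 0*Q 2); -(2%:R*Q 1*Q 2); Q 0^+2-Q 1^+2]]
     = mk 3 6 [:: [:: Q 0 / 2%:R; 0; 0; Q 1 / 2%:R; Q 2 / 2%:R; 0];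
                  [:: 0; Q 1 / 2%:R; 0; Q 0 / 2%:R; 0; Q 2 / 2%:R];
                  [:: 0; 0; Q 2 / 2%:R; 0; Q 0 / 2%:R; Q 1 / 2%:R]] *m S6 (Q 0) (Q 1) (Q 2).
      apply/matrixP => i j; rewrite !mxE; ord_cases i; ord_cases j;
      rewrite !big_ord_recr big_ord0 /= !mxE /=; field; by rewrite ?h2 ?h3 ?h6.
    exact: submxMl.
  + apply/row_subP => k.
    have -> : row k (second_derivs 0 Q) = row (inord (sidx 0 k)) (S6 (Q 0) (Q 1) (Q 2)).
      apply/rowP => j; rewrite mxE secondE !mxE inordK //.
      by case: k => [[|[|[|k]]] ?].
    exact: row_sub.
  + apply/row_subP => k.
    have -> : row k (second_derivs 1 Q) = row (inord (sidx 1 k)) (S6 (Q 0) (Q 1) (Q 2)).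
      apply/rowP => j; rewrite mxE secondE !mxE inordK //.
      by case: k => [[|[|[|k]]] ?].
    exact: row_sub.
  + apply/row_subP => k.
    have -> : row k (second_derivs 2 Q) = row (inord (sidx 2 k)) (S6 (Q 0) (Q 1) (Q 2)).
      apply/rowP => j; rewrite mxE secondE !mxE inordK //.
      by case: k => [[|[|[|k]]] ?].
    exact: row_sub.
- have s0 : (second_derivs 0 Q <= osc_matrix Q)%MS.
    rewrite /osc_matrix; apply: submx_trans (sub_col_r _ _).
    apply: submx_trans (sub_col_r _ _); exact: sub_col_l.
  have s1 : (second_derivs 1 Q <= osc_matrix Q)%MS.
    rewrite /osc_matrix; apply: submx_trans (sub_col_r _ _).
    apply: submx_trans (sub_col_r _ _); apply: submx_trans (sub_col_r _ _).
    exact: sub_col_l.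
  have s2 : (second_derivs 2 Q <= osc_matrix Q)%MS.
    rewrite /osc_matrix; apply: submx_trans (sub_col_r _ _).
    apply: submx_trans (sub_col_r _ _); apply: submx_trans (sub_col_r _ _).
    exact: sub_col_r.
  apply/row_subP => r.
  have key : forall (i k : 'I_3), sidx i k = r ->
     (row r (S6 (Q 0) (Q 1) (Q 2)) <= osc_matrix Q)%MS.
    move=> i k e.
    have -> : row r (S6 (Q 0) (Q 1) (Q 2)) = row k (second_derivs i Q).
      by apply/rowP => j; rewrite [in RHS]mxE secondE !mxE e.
    apply: submx_trans (row_sub _ _) _.
    case: i e => [[|[|[|i]]] p] //= _.
    - by rewrite (_ : Ordinal p = 0); last exact: val_inj.
    - by rewrite (_ : Ordinal p = 1); last exact: val_inj.
    - by rewrite (_ : Ordinal p = 2); last exact: val_inj.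
  case: r key => [[|[|[|[|[|[|r]]]]]] hr] //= key.
  + exact: (key 0 0).
  + exact: (key 1 1).
  + exact: (key 2 2).
  + exact: (key 0 1).
  + exact: (key 0 2).
  + exact: (key 1 2).
Qed.

Lemma rank5 (F : fieldType) (S : 'M[F]_6) (w : 'rV[F]_6) : w != 0 -> w *m S = 0 ->
  (forall u : 'rV_6, u *m S = 0 -> exists t, u = t *: w) -> \rank S = 5%N.
Proof.
move=> wn0 wS hk.
have hker := mxrank_ker S.
have le1 : (\rank (kermx S) <= 1)%N.
  have : (kermx S <= w)%MS.
    apply/row_subP => i.
    have : row i (kermx S) *m S = 0 by rewrite -row_mul mulmx_ker row0.
    move/hk => [t ->]; exact: scalemx_sub (submx_refl w).
  by move/mxrankS; rewrite rank_rV wn0.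
have ge1 : (1 <= \rank (kermx S))%N.
  have : (w <= kermx S)%MS by rewrite sub_kermx wS.
  by move/mxrankS; rewrite rank_rV wn0.
have := rank_leq_row S. lia.
Qed.

Lemma rank_le5 (F : fieldType) (S : 'M[F]_6) (w : 'rV[F]_6) : w != 0 -> w *m S = 0 ->
  (\rank S <= 5)%N.
Proof.
move=> wn0 wS.
have hker := mxrank_ker S.
have ge1 : (1 <= \rank (kermx S))%N.
  have : (w <= kermx S)%MS by rewrite sub_kermx wS.
  by move/mxrankS; rewrite rank_rV wn0.
have := rank_leq_row S. lia.
Qed.

Lemma sub_col_l' (F : fieldType) m1 m2 n (A : 'M[F]_(m1, n)) (B : 'M[F]_(m2, n)) :
  (A <= col_mx A B)%MS.
Proof. by have := submx_refl (col_mx A B); rewrite col_mx_sub => /andP[]. Qed.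
Lemma sub_col_r' (F : fieldType) m1 m2 n (A : 'M[F]_(m1, n)) (B : 'M[F]_(m2, n)) :
  (B <= col_mx A B)%MS.
Proof. by have := submx_refl (col_mx A B); rewrite col_mx_sub => /andP[]. Qed.

Lemma rank4 (F : fieldType) (S : 'M[F]_6) (w1 w2 : 'rV[F]_6) : w1 != 0 ->
  w1 *m S = 0 -> w2 *m S = 0 -> ~~ (w2 <= w1)%MS ->
  (forall u : 'rV_6, u *m S = 0 -> exists t1 t2, u = t1 *: w1 + t2 *: w2) -> \rank S = 4%N.
Proof.
move=> wn0 w1S w2S ind hk.
have hker := mxrank_ker S.
set W := col_mx w1 w2.
have le2 : (\rank (kermx S) <= 2)%N.
  have : (kermx S <= W)%MS.
    apply/row_subP => i.
    have : row i (kermx S) *m S = 0 by rewrite -row_mul mulmx_ker row0.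
    move/hk => [t1 [t2 ->]].
    by rewrite addmx_sub // scalemx_sub // ?sub_col_l' ?sub_col_r'.
  move/mxrankS => h; apply: leq_trans h _; exact: rank_leq_row.
have ge2 : (2 <= \rank (kermx S))%N.
  have : (W <= kermx S)%MS by rewrite col_mx_sub !sub_kermx w1S w2S eqxx.
  move/mxrankS; apply: leq_trans.
  have : (w1 < W)%MS.
    rewrite ltmxE sub_col_l' /=; apply/negP => hW; move/negP: ind; apply.
    apply: submx_trans hW; exact: sub_col_r'.
  by rewrite ltmxErank rank_rV wn0 => /andP[].
have := rank_leq_row S. lia.
Qed.

Definition r6 (F : fieldType) (x0 x1 x2 x3 x4 x5 : F) : 'rV[F]_6 :=
  mk 1 6 [:: [:: x0; x1; x2; x3; x4; x5]].

Lemma r6_eta (F : fieldType) (u : 'rV[F]_6) :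
  u = r6 (u 0 (inord 0)) (u 0 (inord 1)) (u 0 (inord 2)) (u 0 (inord 3)) (u 0 (inord 4)) (u 0 (inord 5)).
Proof.
apply/matrixP => i j; rewrite ord1 !mxE.
by case: j => [[|[|[|[|[|[|j]]]]]] hj] //=; congr (u 0 _); apply: val_inj; rewrite /= inordK.
Qed.

Lemma r6_inj (F : fieldType) (x0 x1 x2 x3 x4 x5 y0 y1 y2 y3 y4 y5 : F) :
  r6 x0 x1 x2 x3 x4 x5 = r6 y0 y1 y2 y3 y4 y5 ->
  x0 = y0 /\ x1 = y1 /\ x2 = y2 /\ x3 = y3 /\ x4 = y4 /\ x5 = y5.
Proof.
move=> e.
have h : forall j : 'I_6, r6 x0 x1 x2 x3 x4 x5 0 j = r6 y0 y1 y2 y3 y4 y5 0 j by rewrite e.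
move: (h (inord 0)) (h (inord 1)) (h (inord 2)) (h (inord 3)) (h (inord 4)) (h (inord 5)).
by rewrite !mxE !inordK.
Qed.

Lemma r60 (F : fieldType) : r6 0 0 0 0 0 0 = 0 :> 'rV[F]_6.
Proof. by apply/matrixP => i j; rewrite ord1 !mxE; case: j => [[|[|[|[|[|[|j]]]]]] hj]. Qed.

Lemma r6_scale (F : fieldType) (t x0 x1 x2 x3 x4 x5 : F) :
  t *: r6 x0 x1 x2 x3 x4 x5 = r6 (t * x0) (t * x1) (t * x2) (t * x3) (t * x4) (t * x5).
Proof. by apply/matrixP => i j; rewrite ord1 !mxE; case: j => [[|[|[|[|[|[|j]]]]]] hj]. Qed.

Lemma r6_add (F : fieldType) (x0 x1 x2 x3 x4 x5 y0 y1 y2 y3 y4 y5 : F) :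
  r6 x0 x1 x2 x3 x4 x5 + r6 y0 y1 y2 y3 y4 y5 = r6 (x0 + y0) (x1 + y1) (x2 + y2) (x3 + y3) (x4 + y4) (x5 + y5).
Proof. by apply/matrixP => i j; rewrite ord1 !mxE; case: j => [[|[|[|[|[|[|j]]]]]] hj]. Qed.

Lemma r6_mul (F : fieldType) (a b c x0 x1 x2 x3 x4 x5 : F) :
  r6 x0 x1 x2 x3 x4 x5 *m S6 a b c =
  r6 (6%:R * a * x0) (6%:R * b * x1) (6%:R * c * x2)
     (2%:R * a * x1 - 2%:R * a * x2 + 2%:R * b * x3 - 2%:R * c * x4)
     (2%:R * b * x0 - 2%:R * b * x2 + 2%:R * a * x3 - 2%:R * c * x5)
     (2%:R * c * x0 - 2%:R * c * x1 + 2%:R * a * x4 - 2%:R * b * x5).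
Proof.
apply/matrixP => i j; rewrite ord1 !mxE.
case: j => [[|[|[|[|[|[|j]]]]]] hj] //=; rewrite !big_ord_recr big_ord0 /= !mxE /=; ring.
Qed.

Lemma r6_neq0 (F : fieldType) (x0 x1 x2 x3 x4 x5 : F) (k : nat) : (k < 6)%N ->
  nth 0 [:: x0; x1; x2; x3; x4; x5] k != 0 -> r6 x0 x1 x2 x3 x4 x5 != 0.
Proof.
move=> hk h; apply/eqP; rewrite -r60 => /r6_inj [e0 [e1 [e2 [e3 [e4 e5]]]]].
by move: h; rewrite e0 e1 e2 e3 e4 e5; case: k hk => [|[|[|[|[|[|k]]]]]] //= _; rewrite eqxx.
Qed.

Lemma ker_eqs (F : fieldType) (a b c x0 x1 x2 x3 x4 x5 : F) :
  r6 x0 x1 x2 x3 x4 x5 *m S6 a b c = 0 ->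
  6%:R * a * x0 = 0 /\ 6%:R * b * x1 = 0 /\ 6%:R * c * x2 = 0 /\
     2%:R * a * x1 - 2%:R * a * x2 + 2%:R * b * x3 - 2%:R * c * x4 = 0 /\
     2%:R * b * x0 - 2%:R * b * x2 + 2%:R * a * x3 - 2%:R * c * x5 = 0 /\
     2%:R * c * x0 - 2%:R * c * x1 + 2%:R * a * x4 - 2%:R * b * x5 = 0.
Proof. by rewrite r6_mul -r60 => /r6_inj. Qed.

Lemma ker_of_eqs (F : fieldType) (a b c x0 x1 x2 x3 x4 x5 : F) :
  6%:R * a * x0 = 0 -> 6%:R * b * x1 = 0 -> 6%:R * c * x2 = 0 ->
  2%:R * a * x1 - 2%:R * a * x2 + 2%:R * b * x3 - 2%:R * c * x4 = 0 ->
  2%:R * b * x0 - 2%:R * b * x2 + 2%:R * a * x3 - 2%:R * c * x5 = 0 ->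
  2%:R * c * x0 - 2%:R * c * x1 + 2%:R * a * x4 - 2%:R * b * x5 = 0 ->
  r6 x0 x1 x2 x3 x4 x5 *m S6 a b c = 0.
Proof. by move=> e0 e1 e2 e3 e4 e5; rewrite r6_mul e0 e1 e2 e3 e4 e5 r60. Qed.

Lemma lin (F : fieldType) (k x e L : F) : k != 0 -> L = 0 -> k * (x - e) = L -> x = e.
Proof. by move=> hk -> /eqP; rewrite mulf_eq0 (negbTE hk) subr_eq0 => /eqP. Qed.

Lemma w_ker (F : fieldType) (a b c : F) : r6 0 0 0 c b a *m S6 a b c = 0.
Proof. by apply: ker_of_eqs; ring. Qed.

Lemma rank_le5_S6 (F : fieldType) (a b c : F) : [\/ a != 0, b != 0 | c != 0] ->
  (\rank (S6 a b c) <= 5)%N.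
Proof.
move=> h; apply: (rank_le5 (w := r6 0 0 0 c b a)); last exact: w_ker.
by case: h => h; [apply: (@r6_neq0 _ _ _ _ _ _ _ 5) | apply: (@r6_neq0 _ _ _ _ _ _ _ 4) | apply: (@r6_neq0 _ _ _ _ _ _ _ 3)].
Qed.

Lemma mul0K (F : fieldType) (k x : F) : k != 0 -> k * x = 0 -> x = 0.
Proof. by move=> hk /eqP; rewrite mulf_eq0 (negbTE hk) => /eqP. Qed.

Lemma lin2 (F : fieldType) (k x e L1 L2 c1 c2 : F) : k != 0 -> L1 = 0 -> L2 = 0 ->
  k * (x - e) = c1 * L1 + c2 * L2 -> x = e.
Proof. move=> hk h1 h2; rewrite h1 h2 !mulr0 addr0; exact: lin. Qed.

Ltac gen_u u := rewrite (r6_eta u);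
  move: (u 0 (inord 0)) (u 0 (inord 1)) (u 0 (inord 2)) (u 0 (inord 3)) (u 0 (inord 4)) (u 0 (inord 5));
  move=> x0 x1 x2 x3 x4 x5 /ker_eqs [e0 [e1 [e2 [e3 [e4 e5]]]]].

Lemma nz2 (F : fieldType) (x y : F) : x != 0 -> y != 0 -> x * y != 0.
Proof. exact: mulf_neq0. Qed.
Lemma nzN (F : fieldType) (x : F) : x != 0 -> - x != 0.
Proof. by rewrite oppr_eq0. Qed.


Lemma caseG (F : fieldType) (a b c : F) : (2%:R : F) != 0 -> (6%:R : F) != 0 ->
  a != 0 -> b != 0 -> c != 0 -> \rank (S6 a b c) = 5%N.
Proof.
move=> h2 h6 ha hb hc; apply: (rank5 (w := r6 0 0 0 c b a)).
- exact: (@r6_neq0 _ _ _ _ _ _ _ 3).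
- exact: w_ker.
move=> u; gen_u u.
have := mul0K (nz2 h6 ha) e0 => ?; subst x0.
have := mul0K (nz2 h6 hb) e1 => ?; subst x1.
have := mul0K (nz2 h6 hc) e2 => ?; subst x2.
have x4E : x4 = b * x3 / c.
  by apply: (lin (nzN (nz2 h2 hc)) e3); field.
have x5E : x5 = a * x3 / c.
  by apply: (lin (nzN (nz2 h2 hc)) e4); field.
exists (x3 / c); rewrite r6_scale x4E x5E; congr r6; by field.
Qed.

Lemma caseH (F : fieldType) (a b : F) : (2%:R : F) != 0 -> (6%:R : F) != 0 ->
  a != 0 -> b != 0 -> a ^+ 2 != b ^+ 2 -> \rank (S6 a b 0) = 5%N.
Proof.
move=> h2 h6 ha hb hab; apply: (rank5 (w := r6 0 0 0 0 b a)).
- exact: (@r6_neq0 _ _ _ _ _ _ _ 4).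
- exact: w_ker.
move=> u; gen_u u.
have := mul0K (nz2 h6 ha) e0 => ?; subst x0.
have := mul0K (nz2 h6 hb) e1 => ?; subst x1.
have hk : (2%:R * (b ^+ 2 - a ^+ 2) : F) != 0.
  by rewrite nz2 // subr_eq0 eq_sym.
have x3E : x3 = 0.
  by apply: (lin2 (c1 := b) (c2 := - a) hk e3 e4); ring.
subst x3.
have x2E : x2 = 0.
  by apply: (lin (nzN (nz2 h2 ha)) e3); ring.
subst x2.
have x5E : x5 = a * x4 / b.
  by apply: (lin (nzN (nz2 h2 hb)) e5); field.
exists (x4 / b); rewrite r6_scale x5E; congr r6; by field.
Qed.

Lemma caseI (F : fieldType) (a c : F) : (2%:R : F) != 0 -> (6%:R : F) != 0 ->
  a != 0 -> c != 0 -> a ^+ 2 != c ^+ 2 -> \rank (S6 a 0 c) = 5%N.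
Proof.
move=> h2 h6 ha hc hac; apply: (rank5 (w := r6 0 0 0 c 0 a)).
- exact: (@r6_neq0 _ _ _ _ _ _ _ 3).
- exact: w_ker.
move=> u; gen_u u.
have := mul0K (nz2 h6 ha) e0 => ?; subst x0.
have := mul0K (nz2 h6 hc) e2 => ?; subst x2.
have hk : (2%:R * (a ^+ 2 - c ^+ 2) : F) != 0.
  by rewrite nz2 // subr_eq0.
have x1E : x1 = 0.
  by apply: (lin2 (c1 := a) (c2 := c) hk e3 e5); ring.
subst x1.
have x4E : x4 = 0.
  by apply: (lin (nzN (nz2 h2 hc)) e3); ring.
subst x4.
have x5E : x5 = a * x3 / c.
  by apply: (lin (nzN (nz2 h2 hc)) e4); field.
exists (x3 / c); rewrite r6_scale x5E; congr r6; by field.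
Qed.

Lemma caseJ (F : fieldType) (b c : F) : (2%:R : F) != 0 -> (6%:R : F) != 0 ->
  b != 0 -> c != 0 -> b ^+ 2 != c ^+ 2 -> \rank (S6 0 b c) = 5%N.
Proof.
move=> h2 h6 hb hc hbc; apply: (rank5 (w := r6 0 0 0 c b 0)).
- exact: (@r6_neq0 _ _ _ _ _ _ _ 3).
- exact: w_ker.
move=> u; gen_u u.
have := mul0K (nz2 h6 hb) e1 => ?; subst x1.
have := mul0K (nz2 h6 hc) e2 => ?; subst x2.
have hk : (2%:R * (b ^+ 2 - c ^+ 2) : F) != 0.
  by rewrite nz2 // subr_eq0.
have x0E : x0 = 0.
  by apply: (lin2 (c1 := b) (c2 := - c) hk e4 e5); ring.
subst x0.
have x5E : x5 = 0.
  by apply: (lin (nzN (nz2 h2 hc)) e4); ring.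
subst x5.
have x4E : x4 = b * x3 / c.
  by apply: (lin (nzN (nz2 h2 hc)) e3); field.
exists (x3 / c); rewrite r6_scale x4E; congr r6; by field.
Qed.

Ltac indep := apply/sub_rVP => -[t]; rewrite r6_scale => /r6_inj;
  rewrite ?mulr0 ?mulr1 => [[? [? [? [? [? ?]]]]]];
  match goal with H : _ = 0 |- _ => by move/eqP: H; rewrite oner_eq0 end.

Lemma caseA (F : fieldType) (a : F) : (2%:R : F) != 0 -> (6%:R : F) != 0 ->
  a != 0 -> \rank (S6 a 0 0) = 4%N.
Proof.
move=> h2 h6 ha; apply: (rank4 (w1 := r6 (0:F) 1 1 0 0 0) (w2 := r6 (0:F) 0 0 0 0 1)).
- exact: (@r6_neq0 _ _ _ _ _ _ _ 1 isT (oner_neq0 _)).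
- by apply: ker_of_eqs; ring.
- by apply: ker_of_eqs; ring.
- indep.
move=> u; gen_u u.
have := mul0K (nz2 h6 ha) e0 => ?; subst x0.
have x2E : x2 = x1 by apply: (lin (nzN (nz2 h2 ha)) e3); ring.
have x3E : x3 = 0 by apply: (lin (nz2 h2 ha) e4); ring.
have x4E : x4 = 0 by apply: (lin (nz2 h2 ha) e5); ring.
exists x1, x5; rewrite !r6_scale r6_add x2E x3E x4E; congr r6; ring.
Qed.

Lemma caseB (F : fieldType) (b : F) : (2%:R : F) != 0 -> (6%:R : F) != 0 ->
  b != 0 -> \rank (S6 0 b 0) = 4%N.
Proof.
move=> h2 h6 hb; apply: (rank4 (w1 := r6 (1:F) 0 1 0 0 0) (w2 := r6 (0:F) 0 0 0 1 0)).
- exact: (@r6_neq0 _ _ _ _ _ _ _ 0 isT (oner_neq0 _)).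
- by apply: ker_of_eqs; ring.
- by apply: ker_of_eqs; ring.
- indep.
move=> u; gen_u u.
have := mul0K (nz2 h6 hb) e1 => ?; subst x1.
have x3E : x3 = 0 by apply: (lin (nz2 h2 hb) e3); ring.
have x2E : x2 = x0 by apply: (lin (nzN (nz2 h2 hb)) e4); ring.
have x5E : x5 = 0 by apply: (lin (nzN (nz2 h2 hb)) e5); ring.
exists x0, x4; rewrite !r6_scale r6_add x2E x3E x5E; congr r6; ring.
Qed.

Lemma caseC (F : fieldType) (c : F) : (2%:R : F) != 0 -> (6%:R : F) != 0 ->
  c != 0 -> \rank (S6 0 0 c) = 4%N.
Proof.
move=> h2 h6 hc; apply: (rank4 (w1 := r6 (1:F) 1 0 0 0 0) (w2 := r6 (0:F) 0 0 1 0 0)).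
- exact: (@r6_neq0 _ _ _ _ _ _ _ 0 isT (oner_neq0 _)).
- by apply: ker_of_eqs; ring.
- by apply: ker_of_eqs; ring.
- indep.
move=> u; gen_u u.
have := mul0K (nz2 h6 hc) e2 => ?; subst x2.
have x4E : x4 = 0 by apply: (lin (nzN (nz2 h2 hc)) e3); ring.
have x5E : x5 = 0 by apply: (lin (nzN (nz2 h2 hc)) e4); ring.
have x1E : x1 = x0 by apply: (lin (nzN (nz2 h2 hc)) e5); ring.
exists x0, x3; rewrite !r6_scale r6_add x1E x4E x5E; congr r6; ring.
Qed.

Lemma sgn_nz (F : fieldType) (s : F) : s = 1 \/ s = -1 -> s != 0.
Proof. by case=> ->; rewrite ?oppr_eq0 oner_neq0. Qed.

Lemma caseD (F : fieldType) (a s : F) : (2%:R : F) != 0 -> (6%:R : F) != 0 ->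
  a != 0 -> s = 1 \/ s = -1 -> \rank (S6 a (s * a) 0) = 4%N.
Proof.
move=> h2 h6 ha hs; have hs0 := sgn_nz hs.
apply: (rank4 (w1 := r6 (0:F) 0 s 1 0 0) (w2 := r6 (0:F) 0 0 0 s 1)).
- exact: (@r6_neq0 _ _ _ _ _ _ _ 3 isT (oner_neq0 _)).
- by case: hs => ->; apply: ker_of_eqs; ring.
- by case: hs => ->; apply: ker_of_eqs; ring.
- indep.
move=> u; gen_u u.
have := mul0K (nz2 h6 ha) e0 => ?; subst x0.
have := mul0K (nz2 h6 (nz2 hs0 ha)) e1 => ?; subst x1.
have x2E : x2 = s * x3 by apply: (lin (nzN (nz2 h2 ha)) e3); ring.
have x4E : x4 = s * x5 by apply: (lin (nz2 h2 ha) e5); ring.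
exists x3, x5; rewrite !r6_scale r6_add x2E x4E; congr r6; ring.
Qed.

Lemma caseE (F : fieldType) (a s : F) : (2%:R : F) != 0 -> (6%:R : F) != 0 ->
  a != 0 -> s = 1 \/ s = -1 -> \rank (S6 a 0 (s * a)) = 4%N.
Proof.
move=> h2 h6 ha hs; have hs0 := sgn_nz hs.
apply: (rank4 (w1 := r6 (0:F) s 0 0 1 0) (w2 := r6 (0:F) 0 0 s 0 1)).
- exact: (@r6_neq0 _ _ _ _ _ _ _ 4 isT (oner_neq0 _)).
- by case: hs => ->; apply: ker_of_eqs; ring.
- by case: hs => ->; apply: ker_of_eqs; ring.
- indep.
move=> u; gen_u u.
have := mul0K (nz2 h6 ha) e0 => ?; subst x0.
have := mul0K (nz2 h6 (nz2 hs0 ha)) e2 => ?; subst x2.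
have x1E : x1 = s * x4 by apply: (lin (nz2 h2 ha) e3); ring.
have x3E : x3 = s * x5 by apply: (lin (nz2 h2 ha) e4); ring.
exists x4, x5; rewrite !r6_scale r6_add x1E x3E; congr r6; ring.
Qed.

Lemma caseF (F : fieldType) (b s : F) : (2%:R : F) != 0 -> (6%:R : F) != 0 ->
  b != 0 -> s = 1 \/ s = -1 -> \rank (S6 0 b (s * b)) = 4%N.
Proof.
move=> h2 h6 hb hs; have hs0 := sgn_nz hs.
apply: (rank4 (w1 := r6 s 0 0 0 0 1) (w2 := r6 (0:F) 0 0 s 1 0)).
- exact: (@r6_neq0 _ _ _ _ _ _ _ 5 isT (oner_neq0 _)).
- by case: hs => ->; apply: ker_of_eqs; ring.
- by case: hs => ->; apply: ker_of_eqs; ring.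
- indep.
move=> u; gen_u u.
have := mul0K (nz2 h6 hb) e1 => ?; subst x1.
have := mul0K (nz2 h6 (nz2 hs0 hb)) e2 => ?; subst x2.
have x0E : x0 = s * x5 by apply: (lin (nz2 h2 hb) e4); ring.
have x3E : x3 = s * x4 by apply: (lin (nz2 h2 hb) e3); ring.
exists x5, x4; rewrite !r6_scale r6_add x0E x3E; congr r6; ring.
Qed.


Lemma Q_ord (F : fieldType) (Q : 'I_3 -> F) (n : nat) (p : (n < 3)%N) :
  Q (Ordinal p) = Q (inord n).
Proof. by congr Q; apply: val_inj; rewrite /= inordK. Qed.

Lemma inord0 : (inord 0 : 'I_3) = 0. Proof. by apply: val_inj; rewrite /= inordK. Qed.
Lemma inord1 : (inord 1 : 'I_3) = 1. Proof. by apply: val_inj; rewrite /= inordK. Qed.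
Lemma inord2 : (inord 2 : 'I_3) = 2. Proof. by apply: val_inj; rewrite /= inordK. Qed.

Lemma nonzero3E (F : fieldType) (Q : 'I_3 -> F) : nonzero3 Q ->
  [\/ Q 0 != 0, Q 1 != 0 | Q 2 != 0].
Proof.
case=> -[[|[|[|i]]] p] //; rewrite Q_ord ?inord0 ?inord1 ?inord2 => h.
- by constructor 1. - by constructor 2. - by constructor 3.
Qed.

Lemma inZ_of (F : fieldType) (Q : 'I_3 -> F) (t : nat) (k x y z : F) :
  (t < 9)%N -> k != 0 -> nth (fun _ => 0) (Zpts F) t = vec3 x y z ->
  Q 0 = k * x -> Q 1 = k * y -> Q 2 = k * z -> inZ Q.
Proof.
move=> ht hk e h0 h1 h2; exists t => //; exists k; split => // i; rewrite e.
case: i => [[|[|[|i]]] p] //; rewrite Q_ord ?inord0 ?inord1 ?inord2 //.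
Qed.

Lemma inZ_pts (F : fieldType) (Q : 'I_3 -> F) : inZ Q ->
  exists t : nat, exists k : F, (t < 9)%N /\ k != 0 /\
    forall x y z, nth (fun _ => 0) (Zpts F) t = vec3 x y z ->
      [/\ Q 0 = k * x, Q 1 = k * y & Q 2 = k * z].
Proof.
case=> t ht [k [hk e]]; exists t, k; split => //; split => // x y z ev.
by rewrite !e ev.
Qed.

Lemma sq_eq (F : fieldType) (x y : F) : x ^+ 2 = y ^+ 2 -> y = x \/ y = - x.
Proof.
move=> e.
have : (y - x) * (y + x) == 0.
  have -> : (y - x) * (y + x) = y ^+ 2 - x ^+ 2 by ring.
  by rewrite e subrr.
rewrite mulf_eq0 subr_eq0 addr_eq0 => /orP[/eqP|/eqP]; auto.
Qed.

Lemma S6_congr (F : fieldType) (a b c a' b' c' : F) :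
  a = a' -> b = b' -> c = c' -> S6 a b c = S6 a' b' c'.
Proof. by move=> -> -> ->. Qed.

Theorem mainTheorem5 (F : closedFieldType) (charF0 : [pchar F] =i pred0) :
  hypo_osculating F /\
  (forall Q : 'I_3 -> F, nonzero3 Q -> ~ inZ Q -> osc2_dim Q = 4%N) /\
  (forall Q : 'I_3 -> F, nonzero3 Q -> inZ Q -> osc2_dim Q = 3%N).
Proof.
have [h2 h3 h6] : [/\ (2%:R : F) != 0, (3%:R : F) != 0 & (6%:R : F) != 0].
  by move/pcharf0P: charF0 => h; rewrite !h.
have dimE : forall Q : 'I_3 -> F, osc2_dim Q = (\rank (S6 (Q 0) (Q 1) (Q 2))).-1.
  by move=> Q; rewrite /osc2_dim osc_rank.
split; [|split].
- move=> Q /nonzero3E nz; rewrite dimE.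
  have := rank_le5_S6 nz.
  by case: (\rank _) => [|[|[|[|[|[|n]]]]]].
- move=> Q /nonzero3E nz nZ; rewrite dimE.
  suff -> : \rank (S6 (Q 0) (Q 1) (Q 2)) = 5%N by [].
  have [a0|an] := eqVneq (Q 0) 0; have [b0|bn] := eqVneq (Q 1) 0;
    have [c0|cn] := eqVneq (Q 2) 0.
  + by case: nz; rewrite ?a0 ?b0 ?c0 eqxx.
  + case: nZ; apply: (@inZ_of _ _ 2 (Q 2) 0 0 1) => //; by rewrite ?mulr0 ?mulr1.
  + case: nZ; apply: (@inZ_of _ _ 1 (Q 1) 0 1 0) => //; by rewrite ?mulr0 ?mulr1.
  + have [e|ne] := eqVneq (Q 1 ^+ 2) (Q 2 ^+ 2).
      case: nZ; case: (sq_eq e) => e'.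
        apply: (@inZ_of _ _ 7 (Q 1) 0 1 1) => //; by rewrite ?mulr0 ?mulr1.
      apply: (@inZ_of _ _ 8 (Q 1) 0 1 (-1)) => //; by rewrite ?mulr0 ?mulr1 ?mulrN1.
    by rewrite a0; apply: caseJ.
  + case: nZ; apply: (@inZ_of _ _ 0 (Q 0) 1 0 0) => //; by rewrite ?mulr0 ?mulr1.
  + have [e|ne] := eqVneq (Q 0 ^+ 2) (Q 2 ^+ 2).
      case: nZ; case: (sq_eq e) => e'.
        apply: (@inZ_of _ _ 5 (Q 0) 1 0 1) => //; by rewrite ?mulr0 ?mulr1.
      apply: (@inZ_of _ _ 6 (Q 0) 1 0 (-1)) => //; by rewrite ?mulr0 ?mulr1 ?mulrN1.
    by rewrite b0; apply: caseI.
  + have [e|ne] := eqVneq (Q 0 ^+ 2) (Q 1 ^+ 2).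
      case: nZ; case: (sq_eq e) => e'.
        apply: (@inZ_of _ _ 3 (Q 0) 1 1 0) => //; by rewrite ?mulr0 ?mulr1.
      apply: (@inZ_of _ _ 4 (Q 0) 1 (-1) 0) => //; by rewrite ?mulr0 ?mulr1 ?mulrN1.
    by rewrite c0; apply: caseH.
  + exact: caseG.
- move=> Q _ /inZ_pts [t [k [ht [hk hP]]]]; rewrite dimE.
  case: t ht hP => [|[|[|[|[|[|[|[|[|t]]]]]]]]] // _ hP;
    have [-> -> ->] := hP _ _ _ erefl.
  + by rewrite (S6_congr (a' := k) (b' := 0) (c' := 0)) ?caseA //; ring.
  + by rewrite (S6_congr (a' := 0) (b' := k) (c' := 0)) ?caseB //; ring.
  + by rewrite (S6_congr (a' := 0) (b' := 0) (c' := k)) ?caseC //; ring.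
  + by rewrite (S6_congr (a' := k) (b' := 1 * k) (c' := 0)) ?caseD //; [left | ring..].
  + by rewrite (S6_congr (a' := k) (b' := -1 * k) (c' := 0)) ?caseD //; [right | ring..].
  + by rewrite (S6_congr (a' := k) (b' := 0) (c' := 1 * k)) ?caseE //; [left | ring..].
  + by rewrite (S6_congr (a' := k) (b' := 0) (c' := -1 * k)) ?caseE //; [right | ring..].
  + by rewrite (S6_congr (a' := 0) (b' := k) (c' := 1 * k)) ?caseF //; [left | ring..].
  + by rewrite (S6_congr (a' := 0) (b' := k) (c' := -1 * k)) ?caseF //; [right | ring..].
Qed.
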